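(* Let $(X,d^\star)$ be a $\star$-metric space such that every infinite subset of $X$ has an $\omega$-accumulation point in the topological space $(X,\mathscr{T}_{d^\star})$. Then $(X,d^\star)$ is totally bounded.
   Context: A $t$-definer is a function $\star:[0,\infty)\times[0,\infty)\to[0,\infty)$ such that for all $a,b,c\ge 0$: $a\star b=b\star a$; $a\star(b\star c)=(a\star b)\star c$; if $a\le b$ then $a\star c\le b\star c$; $a\star 0=a$; and $\star$ is continuous in its first variable with respect to the Euclidean topology. Given a nonempty set $X$ and a $t$-definer $\star$, a $\star$-metric on $X$ is a function $d^\star:X\times X\to[0,\infty)$ such that for all $x,y,z\in X$: $d^\star(x,y)=0$ iff $x=y$; $d^\star(x,y)=d^\star(y,x)$; and $d^\star(x,y)\le d^\star(x,z)\star d^\star(z,y)$; $(X,d^\star)$ is a $\star$-metric space. Put $B_{d^\star}(a,r)=\{x\in X: d^\star(a,x)<r\}$ and let $\mathscr{T}_{d^\star}$ be the topology consisting of all $U\subseteq X$ such that for each $a\in U$ some $B_{d^\star}(a,r)$, $r>0$, is contained in $U$. A point $x$ is an $\omega$-accumulation point of a set $A$ if every neighborhood of $x$ contains infinitely many points of $A$. $(X,d^\star)$ is totally bounded if for every $\epsilon>0$ there is a finite set $F\subseteq X$ with $X=\bigcup_{x\in F}B_{d^\star}(x,\epsilon)$. *)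

(* Defs.v *)
From Stdlib Require Import Reals List.
Open Scope R_scope.

(* A t-definer: an operation on [0,oo), given as a function on R whose
   properties are required (and closure holds) on nonnegative arguments. *)
Definition t_definer (star : R -> R -> R) : Prop :=
  (forall a b, 0 <= a -> 0 <= b -> 0 <= star a b) /\
  (forall a b, 0 <= a -> 0 <= b -> star a b = star b a) /\
  (forall a b c, 0 <= a -> 0 <= b -> 0 <= c ->
      star a (star b c) = star (star a b) c) /\
  (forall a b c, 0 <= a -> 0 <= b -> 0 <= c -> a <= b -> star a c <= star b c) /\
  (forall a, 0 <= a -> star a 0 = a) /\
  (forall c a, 0 <= c -> 0 <= a ->
     forall eps, eps > 0 -> exists delta, delta > 0 /\
       forall a', 0 <= a' -> Rabs (a' - a) < delta ->
         Rabs (star a' c - star a c) < eps).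

Definition star_metric {X : Type} (star : R -> R -> R) (d : X -> X -> R) : Prop :=
  (forall x y, 0 <= d x y) /\
  (forall x y, d x y = 0 <-> x = y) /\
  (forall x y, d x y = d y x) /\
  (forall x y z, d x y <= star (d x z) (d z y)).

Definition sball {X : Type} (d : X -> X -> R) (a : X) (r : R) : X -> Prop :=
  fun x => d a x < r.

Definition sopen {X : Type} (d : X -> X -> R) (U : X -> Prop) : Prop :=
  forall a, U a -> exists r, r > 0 /\ forall x, sball d a r x -> U x.

Definition sneighborhood {X : Type} (d : X -> X -> R) (x : X) (N : X -> Prop) : Prop :=
  exists U, sopen d U /\ U x /\ forall y, U y -> N y.

Definition finite_set {X : Type} (A : X -> Prop) : Prop :=
  exists l : list X, forall x, A x -> In x l.

Definition omega_acc_point {X : Type} (d : X -> X -> R) (A : X -> Prop) (x : X) : Prop :=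
  forall N, sneighborhood d x N -> ~ finite_set (fun y => N y /\ A y).

Definition totally_bounded {X : Type} (d : X -> X -> R) : Prop :=
  forall eps, eps > 0 -> exists F : list X,
    forall y, exists x, In x F /\ sball d x eps y.

(* Main.v *)
Require Import Defs.
From Stdlib Require Import Reals List.
From Stdlib Require Import Classical ClassicalEpsilon Lra Lia.
Open Scope R_scope.

Fixpoint Lseq {X : Type} (g : list X -> X) (n : nat) : list X :=
  match n with O => nil | S k => g (Lseq g k) :: Lseq g k end.

Lemma Lseq_len {X} (g : list X -> X) n : length (Lseq g n) = n.
Proof. induction n; simpl; auto. Qed.

Lemma Lseq_incl {X} (g : list X -> X) n k : incl (Lseq g n) (Lseq g (n + k)).
Proof.
  induction k.
  - rewrite Nat.add_0_r. apply incl_refl.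
  - rewrite Nat.add_succ_r. simpl. intros a Ha. right. auto.
Qed.

Lemma star_small (star : R -> R -> R) (Hstar : t_definer star) :
  forall s, s > 0 -> exists t, t > 0 /\ forall a b, 0 <= a -> 0 <= b -> a < t -> b < t ->
    star a b < s.
Proof.
  destruct Hstar as [H0 [Hc [Ha [Hm [Hz Hcont]]]]].
  intros s Hs.
  destruct (Hcont (s/2) 0 ltac:(lra) ltac:(lra) (s/2) ltac:(lra)) as [de [Hde Hd]].
  exists (Rmin de (s/2)). split.
  { apply Rmin_pos; lra. }
  intros a b Ha0 Hb0 Hat Hbt.
  assert (Hat1 : a < de) by (eapply Rlt_le_trans; [exact Hat| apply Rmin_l]).
  assert (Hbt2 : b < s/2) by (eapply Rlt_le_trans; [exact Hbt| apply Rmin_r]).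
  assert (E1 : star a b <= star a (s/2)).
  { rewrite (Hc a b), (Hc a (s/2)) by lra. apply Hm; lra. }
  assert (E2 : star 0 (s/2) = s/2).
  { rewrite Hc by lra. apply Hz; lra. }
  specialize (Hd a Ha0 ltac:(rewrite Rminus_0_r, Rabs_right; lra)).
  rewrite E2 in Hd.
  apply Rabs_def2 in Hd. lra.
Qed.

Theorem theorem3p2 (X : Type) (star : R -> R -> R) (d : X -> X -> R)
  (HX : inhabited X) (Hstar : t_definer star) (Hd : star_metric star d)
  (Hacc : forall A : X -> Prop, ~ finite_set A ->
            exists x, omega_acc_point d A x) :
  totally_bounded d.
Proof.
  destruct Hd as [Dnn [Deq [Dsym Dtri]]].
  assert (Dxx : forall x, d x x = 0) by (intro x; apply Deq; reflexivity).
  intros eps Heps. apply NNPP; intro Hno.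
  assert (Hy : forall F, exists y, forall x, In x F -> ~ d x y < eps).
  { intro F. apply NNPP; intro H. apply Hno. exists F. intro y.
    apply NNPP; intro H2. apply H. exists y. intros x Hx Hlt. apply H2.
    exists x; split; auto. }
  set (g := fun F => proj1_sig (constructive_indefinite_description _ (Hy F))).
  assert (Hg : forall F x, In x F -> ~ d x (g F) < eps).
  { intros F. unfold g. destruct (constructive_indefinite_description _ (Hy F)); simpl; auto. }
  set (L := Lseq g).
  assert (Hsep : forall n a b, In a (L n) -> In b (L n) -> a <> b -> ~ d a b < eps).
  { induction n; simpl; [tauto|].
    intros a b [Ea|Ea] [Eb|Eb] Hab.
    - subst; congruence.
    - subst. rewrite Dsym. apply Hg; auto.
    - subst. apply Hg; auto.
    - apply IHn; auto. }
  assert (Hnd : forall n, NoDup (L n)).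
  { induction n; simpl; constructor; auto.
    intro Hin. apply (Hg _ _ Hin). rewrite Dxx. lra. }
  set (A := fun z => exists n, In z (L n)).
  assert (HA : ~ finite_set A).
  { intros [l Hl].
    pose proof (NoDup_incl_length (Hnd (S (length l))) (l' := l)) as HH.
    unfold L in HH. rewrite Lseq_len in HH.
    assert (length l < length l)%nat; [|lia].
    apply HH. intros a Ha. apply Hl. exists (S (length l)). exact Ha. }
  destruct (Hacc A HA) as [x Hx].
  destruct (star_small star Hstar eps Heps) as [t [Ht Hst]].
  set (N := fun y => d x y < t).
  assert (HN : sneighborhood d x N).
  { exists (fun y => exists s, s > 0 /\ forall w, d y w < s -> d x w < t).
    split; [|split].
    - intros a [s [Hs Hw]].
      destruct (star_small star Hstar s Hs) as [t' [Ht' Hst']].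
      exists t'. split; auto. intros z Hz. exists t'. split; auto.
      intros w Hw'. apply Hw.
      eapply Rle_lt_trans; [apply (Dtri a w z)|].
      apply Hst'; auto.
    - exists t. split; auto.
    - intros y [s [Hs Hw]]. apply Hw. rewrite Dxx. lra. }
  specialize (Hx N HN).
  assert (Hy1 : exists y1, N y1 /\ A y1).
  { apply NNPP; intro H. apply Hx. exists nil. intros z Hz. apply H. exists z; auto. }
  destruct Hy1 as [y1 [N1 A1]].
  assert (Hy2 : exists y2, N y2 /\ A y2 /\ y2 <> y1).
  { apply NNPP; intro H. apply Hx. exists (y1 :: nil). intros z [Hz1 Hz2].
    destruct (classic (z = y1)) as [E|E]; [left; auto|].
    exfalso. apply H. exists z; auto. }
  destruct Hy2 as [y2 [N2 [A2 Ne]]].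
  destruct A1 as [n Hn]. destruct A2 as [m Hm].
  apply (Hsep (n + m)%nat y1 y2).
  - apply Lseq_incl. exact Hn.
  - rewrite Nat.add_comm. apply Lseq_incl. exact Hm.
  - auto.
  - eapply Rle_lt_trans; [apply (Dtri y1 y2 x)|].
    apply Hst; auto. rewrite Dsym. exact N1.
Qed.
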